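(* Let $\mathcal{X}=\{\{1,4,5\},\{2,4,5\},\{1,6,7\},\{2,6,7\},\{1,2,3\}\}$ on the ground set $[7]$. Then the uniform matroid $U_{2,7}$ is the unique minimal $\mathcal{X}$-matroid with respect to the dependency order, while $\mathrm{val}_{\mathcal{X}}([7])=3$; in particular $\mathrm{val}_{\mathcal{X}}$ is not the rank function of the unique minimal $\mathcal{X}$-matroid.
   Context: An $\mathcal{X}$-matroid is a matroid on $[7]$ in which every member of $\mathcal{X}$ is a circuit. Dependency order: $N_1\le N_2$ iff every dependent set of $N_1$ is dependent in $N_2$. $U_{2,7}$ is the uniform matroid of rank $2$ on $[7]$ (dependent sets are the subsets of size $\ge3$). A proper $\mathcal{X}$-sequence is a sequence $\mathcal{S}=(X_1,\dots,X_k)$ ($k\ge0$) of members of $\mathcal{X}$ with $X_i\not\subseteq\bigcup_{j<i}X_j$ for $i=2,\dots,k$; for $F\subseteq[7]$, $\mathrm{val}(F,\mathcal{S})=|F\cup\bigcup_{i=1}^kX_i|-k$, and $\mathrm{val}_{\mathcal{X}}(F)$ is the minimum of $\mathrm{val}(F,\mathcal{S})$ over all proper $\mathcal{X}$-sequences $\mathcal{S}$. *)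

(* Defs.v *)
(* Ground set [7] = {1,...,7} is modelled by 'I_7,
   where the element k of [7] is the ordinal (k-1) (see [lab]). *)
From mathcomp Require Import all_boot.
Set Implicit Arguments. Unset Strict Implicit. Unset Printing Implicit Defensive.

Definition E := 'I_7.

Definition lab (k : nat) : E := inord k.-1.

Definition is_matroid (I : {set {set E}}) : Prop :=
  [/\ set0 \in I,
      (forall A B : {set E}, B \in I -> A \subset B -> A \in I) &
      (forall A B : {set E}, A \in I -> B \in I -> #|A| < #|B| ->
         exists2 x, x \in B :\: A & x |: A \in I)].

Definition dependent (I : {set {set E}}) (A : {set E}) : Prop := A \notin I.

Definition circuit (I : {set {set E}}) (C : {set E}) : Prop :=
  dependent I C /\ (forall D : {set E}, D \proper C -> ~ dependent I D).

Definition X_matroid (X : {set {set E}}) (I : {set {set E}}) : Prop :=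
  is_matroid I /\ (forall C, C \in X -> circuit I C).

Definition dep_le (I1 I2 : {set {set E}}) : Prop :=
  forall A : {set E}, dependent I1 A -> dependent I2 A.

Definition minimal_X_matroid (X : {set {set E}}) (I : {set {set E}}) : Prop :=
  X_matroid X I /\
  (forall I' : {set {set E}}, X_matroid X I' -> dep_le I' I -> I' = I).

Definition U27 : {set {set E}} := [set A : {set E} | #|A| <= 2].

Definition rank (I : {set {set E}}) (F : {set E}) : nat :=
  \max_(A in I | A \subset F) #|A|.

Definition proper_seq (X : {set {set E}}) (S : seq {set E}) : Prop :=
  (forall Y, Y \in S -> Y \in X) /\
  (forall i, 1 <= i < size S ->
     ~~ (nth set0 S i \subset \bigcup_(Y <- take i S) Y)).

Definition val (F : {set E}) (S : seq {set E}) : nat :=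
  #|F :|: \bigcup_(Y <- S) Y| - size S.

Definition valX_is (X : {set {set E}}) (F : {set E}) (v : nat) : Prop :=
  (exists S, proper_seq X S /\ val F S = v) /\
  (forall S, proper_seq X S -> v <= val F S).

Definition Xex : {set {set E}} :=
  [set [set lab 1; lab 4; lab 5]; [set lab 2; lab 4; lab 5];
       [set lab 1; lab 6; lab 7]; [set lab 2; lab 6; lab 7];
       [set lab 1; lab 2; lab 3]].

(* Main.v *)
Require Import Defs.
From mathcomp Require Import all_boot.
Set Implicit Arguments. Unset Strict Implicit.
Definition o0 : E := @Ordinal 7 0 isT.
Definition o1 : E := @Ordinal 7 1 isT.
Definition o2 : E := @Ordinal 7 2 isT.
Definition o3 : E := @Ordinal 7 3 isT.
Definition o4 : E := @Ordinal 7 4 isT.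
Definition o5 : E := @Ordinal 7 5 isT.
Definition o6 : E := @Ordinal 7 6 isT.
Definition ords : seq E := [:: o0; o1; o2; o3; o4; o5; o6].
Lemma enumE : enum 'I_7 = ords.
Proof. apply: (inj_map val_inj). by rewrite val_enum_ord. Qed.
Lemma E_all x : x \in ords.
Proof. by rewrite -enumE mem_enum. Qed.
Lemma E_cases (P : E -> Prop) : P o0 -> P o1 -> P o2 -> P o3 -> P o4 -> P o5 -> P o6 -> forall x, P x.
Proof.
move=> p0 p1 p2 p3 p4 p5 p6 x; move: (E_all x).
rewrite !in_cons in_nil orbF.
by do ! (case/orP; first by move/eqP->); move/eqP->.
Qed.
Lemma labO : (lab 1 = o0) * (lab 2 = o1) * (lab 3 = o2) * (lab 4 = o3) * (lab 5 = o4) * (lab 6 = o5) * (lab 7 = o6).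
Proof. by do ! split; apply/val_inj; rewrite /= inordK. Qed.
Definition code (A : {set E}) : seq bool := [seq (x \in A) | x : E <- ords].
Lemma code_inj : injective code.
Proof. move=> A B /eq_in_map h; apply/setP => x; exact: h x (E_all x). Qed.
Lemma code_card (A : {set E}) : #|A| = count id (code A).
Proof. rewrite cardE /enum_mem size_filter -enumT enumE count_map; by apply: eq_count. Qed.
Definition subc (c d : seq bool) := all (fun p => p.1 ==> p.2) (zip c d).
Definition corc (c d : seq bool) := [seq p.1 || p.2 | p <- zip c d].
Definition cdiff (c d : seq bool) := [seq p.1 && ~~ p.2 | p <- zip c d].
Lemma code_subset (A B : {set E}) : (A \subset B) = subc (code A) (code B).
Proof.
have -> : (A \subset B) = all (fun x => (x \in A) ==> (x \in B)) ords.
  apply/subsetP/allP => h x; first by move=> _; apply/implyP; exact: h.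
  by move=> xa; exact: (implyP (h x (E_all x))).
rewrite /subc /code; elim: ords => //= y s ->; done.
Qed.
Lemma code_setU (A B : {set E}) : code (A :|: B) = corc (code A) (code B).
Proof. rewrite /corc /code; elim: ords => //= y s ->; by rewrite inE. Qed.
Lemma code_setD (A B : {set E}) : code (A :\: B) = cdiff (code A) (code B).
Proof. rewrite /cdiff /code; elim: ords => //= y s ->; by rewrite inE andbC. Qed.
Lemma code_set1 (x : E) : code [set x] = [seq y == x | y <- ords].
Proof. by rewrite /code; apply: eq_map => y; rewrite inE. Qed.
Lemma code_set0 : code set0 = nseq 7 false.
Proof. by rewrite /code /= !inE. Qed.
Lemma in_code (x : E) (A : {set E}) : (x \in A) = nth false (code A) x.
Proof. by move: x; apply: E_cases. Qed.
Definition Xl : seq {set E} := [:: [set lab 1; lab 4; lab 5]; [set lab 2; lab 4; lab 5];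
       [set lab 1; lab 6; lab 7]; [set lab 2; lab 6; lab 7];
       [set lab 1; lab 2; lab 3]].
Lemma XexE (C : {set E}) : (C \in Xex) = (C \in Xl).
Proof. rewrite /Xex !inE. rewrite -!orbA. by []. Qed.
Lemma XexC (C : {set E}) : (C \in Xex) = (code C \in map code Xl).
Proof. by rewrite XexE (mem_map code_inj). Qed.
Definition CL := [:: [:: true;false;false;true;true;false;false];
  [:: false;true;false;true;true;false;false];
  [:: true;false;false;false;false;true;true];
  [:: false;true;false;false;false;true;true];
  [:: true;true;true;false;false;false;false]].
Lemma mapXl : map code Xl = CL.
Proof. rewrite /Xl !labO /= !code_setU !code_set1. vm_compute. reflexivity. Qed.
Ltac cmp := rewrite ?labO ?properE ?XexC ?mapXl ?in_code ?code_card ?code_subset ?code_setD ?code_setU ?code_set1 ?code_set0; vm_compute; try done.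

Lemma indep (I : {set {set E}}) (C D : {set E}) : X_matroid Xex I -> C \in Xex -> D \proper C -> D \in I.
Proof. move=> [_ hc] hC hD; have [_ h] := hc C hC; apply/negPn/negP; exact: h D hD. Qed.
Lemma depX (I : {set {set E}}) (C : {set E}) : X_matroid Xex I -> C \in Xex -> C \notin I.
Proof. move=> [_ hc] hC; exact: (hc C hC).1. Qed.
Lemma phase2 (I : {set {set E}}) (S B : {set E}) : X_matroid Xex I -> S \in I -> B \in I -> #|B| < #|S| ->
  (forall y, y \in S :\: B -> y |: B \in Xex) -> False.
Proof.
move=> hX hS hB hlt hy; have [[_ _ haug] _] := hX.
have [y hyS hyI] := haug _ _ hB hS hlt.
by move: (depX hX (hy y hyS)); rewrite hyI.
Qed.

Lemma rank2 (I : {set {set E}}) : X_matroid Xex I -> forall A, A \in I -> #|A| <= 2.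
Proof.
move=> hX A hA; rewrite leqNgt; apply/negP => h3.
have [[_ _ haug] _] := hX.
have hB : [set lab 1; lab 2] \in I.
  by apply: (indep hX (C := [set lab 1; lab 2; lab 3])); cmp.
have c2 : #|[set lab 1; lab 2]| = 2 by cmp.
have hlt : #|[set lab 1; lab 2]| < #|A| by rewrite c2.
have [x hx hxI] := haug _ _ hB hA hlt.
move: x hx hxI; apply: E_cases => hx hxI.
- by move: hx; rewrite !inE !labO; vm_compute.
- by move: hx; rewrite !inE !labO; vm_compute.
- have : o2 |: [set lab 1; lab 2] \in Xex by cmp.
  by move/(depX hX); rewrite hxI.
- apply: (phase2 hX hxI (B := [set lab 4; lab 5])).
  + by apply: (indep hX (C := [set lab 1; lab 4; lab 5])); cmp.
  + cmp.
  + apply: E_cases; cmp.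
- apply: (phase2 hX hxI (B := [set lab 4; lab 5])).
  + by apply: (indep hX (C := [set lab 1; lab 4; lab 5])); cmp.
  + cmp.
  + apply: E_cases; cmp.
- apply: (phase2 hX hxI (B := [set lab 6; lab 7])).
  + by apply: (indep hX (C := [set lab 1; lab 6; lab 7])); cmp.
  + cmp.
  + apply: E_cases; cmp.
- apply: (phase2 hX hxI (B := [set lab 6; lab 7])).
  + by apply: (indep hX (C := [set lab 1; lab 6; lab 7])); cmp.
  + cmp.
  + apply: E_cases; cmp.
Qed.

Definition z7 := nseq 7 false.
Lemma brute : all (fun a => all (fun b => all (fun c => all (fun d => all (fun e =>
  ~~ [&& ~~ subc b (corc a z7), ~~ subc c (corc a (corc b z7)),
         ~~ subc d (corc a (corc b (corc c z7))) &
         ~~ subc e (corc a (corc b (corc c (corc d z7))))]) CL) CL) CL) CL) CL.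
Proof. vm_compute. reflexivity. Qed.

Lemma inCL (C : {set E}) : C \in Xex -> code C \in CL.
Proof. by rewrite XexC mapXl. Qed.

Lemma proper_le4 (S : seq {set E}) : proper_seq Xex S -> size S <= 4.
Proof.
move=> [hX hp]; rewrite leqNgt; apply/negP => h5.
case: S hX hp h5 => [|a [|b [|c [|d [|e r]]]]] //= hX hp _.
have ha : code a \in CL by apply: inCL; apply: hX; rewrite !inE eqxx ?orbT.
have hb : code b \in CL by apply: inCL; apply: hX; rewrite !inE eqxx ?orbT.
have hc : code c \in CL by apply: inCL; apply: hX; rewrite !inE eqxx ?orbT.
have hd : code d \in CL by apply: inCL; apply: hX; rewrite !inE eqxx ?orbT.
have he : code e \in CL by apply: inCL; apply: hX; rewrite !inE eqxx ?orbT.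
have h1 := hp 1 erefl; have h2 := hp 2 erefl; have h3 := hp 3 erefl; have h4 := hp 4 erefl.
move: h1 h2 h3 h4; rewrite /= !big_cons !big_nil !code_subset !code_setU !code_set0 -/z7.
move=> h1 h2 h3 h4.
move/allP: brute => /(_ _ ha)/allP/(_ _ hb)/allP/(_ _ hc)/allP/(_ _ hd)/allP/(_ _ he).
by rewrite h1 h2 h3 h4.
Qed.

Definition S0 : seq {set E} := [:: [set lab 1; lab 4; lab 5]; [set lab 1; lab 6; lab 7];
  [set lab 2; lab 4; lab 5]; [set lab 1; lab 2; lab 3]].

Lemma S0proper : proper_seq Xex S0.
Proof.
split.
  move=> Y; rewrite XexE !in_cons in_nil orbF => /or4P [] /eqP ->; by rewrite eqxx ?orbT.
move=> [|[|[|[|i]]]] //= _; rewrite !big_cons !big_nil; cmp.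
Qed.

Lemma valT (S : seq {set E}) : Defs.val [set: E] S = 7 - size S.
Proof. by rewrite /Defs.val setTU cardsT card_ord. Qed.

Lemma valX3 : valX_is Xex [set: E] 3.
Proof.
split; first by exists S0; split; [exact: S0proper | rewrite valT].
move=> S hS; rewrite valT; move: (proper_le4 hS).
by case: (size S) => [|[|[|[|[|]]]]].
Qed.

Lemma matU27 : is_matroid U27.
Proof.
split.
- by rewrite inE cards0.
- move=> A B; rewrite !inE => hB /subset_leq_card hAB; exact: leq_trans hAB hB.
- move=> A B; rewrite !inE => hA hB hlt.
  case: (set_0Vmem (B :\: A)) => [h0|[x hx]].
    move: h0 => /eqP; rewrite setD_eq0 => /subset_leq_card.
    by rewrite leqNgt hlt.
  exists x => //; rewrite inE cardsU1; move: hx; rewrite inE => /andP[hxA _].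
  by rewrite hxA add1n; exact: leq_trans hlt hB.
Qed.

Lemma XU27 : X_matroid Xex U27.
Proof.
split; first exact: matU27.
move=> C hC.
have c3 : #|C| = 3.
  have := inCL hC; rewrite code_card.
  have : all (fun c => count id c == 3) CL by [].
  by move/allP => h /h /eqP.
split; first by rewrite /dependent inE c3.
move=> D /proper_card; rewrite c3 => hD; rewrite /dependent inE; apply/negP; rewrite negbK; exact: hD.
Qed.

Lemma allX (I : {set {set E}}) : X_matroid Xex I -> dep_le U27 I.
Proof.
move=> hX A; rewrite /dependent inE -ltnNge => h3; apply/negP => hA.
by have := rank2 hX hA; rewrite leqNgt h3.
Qed.

Lemma eqI (I : {set {set E}}) : dep_le I U27 -> dep_le U27 I -> I = U27.
Proof.
move=> h1 h2; apply/setP => A; apply/idP/idP => h.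
- exact: (contraLR (h2 A) h).
- exact: (contraLR (h1 A) h).
Qed.

Theorem mainTheorem18 :
  (* U_{2,7} is the unique minimal X-matroid *)
  is_matroid U27 /\
  minimal_X_matroid Xex U27 /\
  (forall I : {set {set E}}, minimal_X_matroid Xex I -> I = U27) /\
  (* val_X([7]) = 3 *)
  valX_is Xex [set: E] 3 /\
  (* val_X is not the rank function of U_{2,7} *)
  ~ (forall F : {set E}, valX_is Xex F (rank U27 F)).
Proof.
split; first exact: matU27.
split.
  split; first exact: XU27.
  move=> I' hI' hle; exact: eqI hle (allX hI').
split.
  move=> I [hI hmin]; symmetry; exact: hmin U27 XU27 (allX hI).
split; first exact: valX3.
move=> h; have [[S [hS hv]] _] := h [set: E].
have hr : rank U27 [set: E] <= 2.
  apply/bigmax_leqP => A /andP[]; by rewrite inE.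
have [_ hlow] := valX3; move: (hlow S hS); rewrite hv => h3.
by move: (leq_trans h3 hr).
Qed.
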